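(* (a) For every $\epsilon>0$ there are infinitely many natural numbers $k$ with $h(k)>(2-\epsilon)k$. (b) For every $\epsilon>0$ there is $K$ such that $h(k)<(2+\epsilon)k\ln k$ for all $k\geq K$ (in particular $h(k)$ exists for every $k$).
   Context: Graphs are finite, may have multiple edges but no loops. For an Abelian group $\Gamma$, a graph $G$ is $\Gamma$-colorable if for some (equivalently, any) orientation $D$ of $G$ and every function $\varphi:E(G)\to\Gamma$ there is a vertex coloring $c:V(G)\to\Gamma$ with $c(w)-c(u)\neq\varphi(uw)$ for every directed edge $uw$ of $D$. For a natural number $k$, $h(k)$ is the least number such that whenever a graph $G$ is $\Gamma$-colorable for some Abelian group $\Gamma$ of order $k$, $G$ is also $\Gamma'$-colorable for every Abelian group $\Gamma'$ of order $|\Gamma'|\geq h(k)$. *)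

(* Defs.v *)
From mathcomp Require Import all_boot all_algebra.
Set Implicit Arguments. Unset Strict Implicit. Unset Printing Implicit Defensive.
Import GRing.Theory.
Local Open Scope ring_scope.

(* A finite loopless multigraph together with a fixed orientation:
   vertex set V, edge set E (parallel edges allowed), each edge e directed
   from [tl e] to [hd e], with [tl e != hd e] (no loops).
   Every finite loopless multigraph arises this way (choose any orientation);
   Gamma-colorability does not depend on the orientation. *)
Record ograph := OGraph {
  gV : finType;
  gE : finType;
  tl : gE -> gV;
  hd : gE -> gV;
  loopless : forall e, tl e != hd e
}.

Definition colorable (Gamma : finZmodType) (G : ograph) : Prop :=
  forall phi : gE G -> Gamma, exists c : gV G -> Gamma,
    forall e : gE G, c (hd e) - c (tl e) != phi e.

Definition h_prop (k m : nat) : Prop :=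
  forall G : ograph,
    (exists Gamma : finZmodType, #|Gamma| = k /\ colorable Gamma G) ->
    forall Gamma' : finZmodType, (m <= #|Gamma'|)%N -> colorable Gamma' G.

Definition is_h (k m : nat) : Prop :=
  h_prop k m /\ forall m', h_prop k m' -> (m <= m')%N.

(* Main.v *)
Require Import Defs.
From Stdlib Require Import Reals Classical.
Module H.
From HB Require Import structures.
From mathcomp Require Import all_boot all_algebra.
Set Warnings "-all".
Set Implicit Arguments. Unset Strict Implicit.
Import GRing.Theory.
Local Open Scope ring_scope.

Definition ES (G : ograph) (S : {set gV G}) : {set gE G} :=
  [set e | (tl e \in S) && (hd e \in S)].
Definition deg (G : ograph) (S : {set gV G}) (v : gV G) : nat :=
  (#|[set e in ES S | tl e == v]| + #|[set e in ES S | hd e == v]|)%N.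

Lemma greedy (G : ograph) (M : nat) (Gm : finZmodType) : (M <= #|Gm|)%N ->
  (forall S : {set gV G}, S != set0 -> exists2 v, v \in S & (deg S v < M)%N) ->
  colorable Gm G.
Proof.
move=> hM hdeg.
suff: forall n (S : {set gV G}), (#|S| <= n)%N -> forall phi : gE G -> Gm,
   exists c : gV G -> Gm, forall e, e \in ES S -> c (hd e) - c (tl e) != phi e.
  move=> H phi; have [c hc] := H _ setT (leqnn _) phi; exists c => e.
  by apply: hc; rewrite inE !inE.
elim=> [|n IH] S hS phi.
  exists (fun _ => 0) => e; move: hS; rewrite leqn0 cards_eq0 => /eqP ->.
  by rewrite inE inE.
have [->|S0] := eqVneq S set0.
  by exists (fun _ => 0) => e; rewrite inE inE.
have [v vS dv] := hdeg S S0.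
have [|c hc] := IH (S :\ v) _ phi.
  by rewrite -ltnS (leq_trans _ hS) // (cardsD1 v S) vS.
set A := [set e in ES S | tl e == v]; set B := [set e in ES S | hd e == v].
set F := [set c (hd e) - phi e | e in A] :|: [set c (tl e) + phi e | e in B].
have hF : (#|F| < #|Gm|)%N.
  apply: leq_ltn_trans (leq_card_setU _ _) _.
  apply: leq_ltn_trans (leq_add (leq_imset_card _ _) (leq_imset_card _ _)) _.
  exact: leq_trans dv hM.
have : (0 < #|~: F|)%N by rewrite cardsCs setCK subn_gt0.
case/card_gt0P=> a; rewrite inE => aF.
exists (fun x => if x == v then a else c x) => e eS.
have loop := loopless e.
case: (eqVneq (tl e) v) => [tv|tv].
  have hv : hd e != v by rewrite -tv eq_sym.
  rewrite (negbTE hv); apply/eqP => E; move/negP: aF; apply.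
  apply/setUP; left; apply/imsetP; exists e; first by rewrite inE eS tv eqxx.
  by rewrite -E opprB addrC subrK.
case: (eqVneq (hd e) v) => [hv|hv].
  apply/eqP => E; move/negP: aF; apply.
  apply/setUP; right; apply/imsetP; exists e; first by rewrite inE eS hv eqxx.
  by rewrite -E addrC subrK.
rewrite /=; apply: hc; move: eS; rewrite !inE tv hv /=.
done.
Qed.

Lemma famcard (aT rT : finType) (F : aT -> pred rT) : #|family F| = \prod_(x : aT) #|F x|.
Proof. by rewrite card_family foldrE big_map big_enum. Qed.

Lemma prod_split (T : finType) (A : {set T}) (a b : nat) :
  (\prod_(x : T) (if x \in A then a else b) = a ^ #|A| * b ^ #|~: A|)%N.
Proof.
rewrite (bigID (fun x => x \in A)) /=; congr (_ * _).
  rewrite -prod_nat_const; apply: eq_big => [x|x ->] //.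
rewrite -prod_nat_const; apply: eq_big => [x|x /negbTE ->] //; by rewrite inE.
Qed.

Lemma count_bound (G : ograph) (Gm : finZmodType) (S : {set gV G}) :
  colorable Gm G -> (#|Gm| ^ #|ES S| <= #|Gm| ^ #|S| * #|Gm|.-1 ^ #|ES S|)%N.
Proof.
move=> col.
set k := #|Gm|.
have k0 : (0 < k)%N by apply/card_gt0P; exists 0.
pose CS := family (fun v : gV G => if v \in S then (predT : pred Gm) else pred1 0).
pose Good (c : {ffun gV G -> Gm}) := family (fun e : gE G =>
   if e \in ES S then (predC1 (c (hd e) - c (tl e)) : pred Gm) else predT).
have cardGood c : #|Good c| = (k.-1 ^ #|ES S| * k ^ #|~: ES S|)%N.
  rewrite famcard -prod_split; apply: eq_bigr => e _.
  by case: (e \in ES S); rewrite ?cardC1 //; apply: eq_card.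
have cardCS : #|CS| = (k ^ #|S|)%N.
  rewrite famcard -[(k ^ #|S|)%N]muln1 -(exp1n #|~: S|) -prod_split; apply: eq_bigr => v _.
  by case: (v \in S); rewrite ?card1 //; apply: eq_card.
have main : (k ^ #|gE G| <= \sum_(c in CS) #|Good c|)%N.
  rewrite -card_ffun.
  have -> : (\sum_(c in CS) #|Good c| = \sum_(c in CS) \sum_(phi : {ffun gE G -> Gm}) (phi \in Good c : nat))%N.
    apply: eq_bigr => c _; rewrite -sum1_card big_mkcond /=.
    by apply: eq_bigr => phi _; case: (phi \in Good c).
  rewrite exchange_big /= -[X in (X <= _)%N]sum1_card; apply: leq_sum => phi _;
  have [c0 hc0] := col (fun e => phi e).
  pose c := [ffun v => if v \in S then c0 v else 0].
  have cCS : c \in CS.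
    apply/forallP => v; rewrite /finfun.fmem /c ffunE /=; case: (v \in S) => //=; by rewrite inE.
  have pG : phi \in Good c.
    apply/forallP => e; rewrite /finfun.fmem /=; case eS: (e \in ES S); last by [].
    rewrite inE eq_sym.
    move: eS; rewrite inE => /andP [t h]; rewrite /c !ffunE t h.
    exact: hc0.
 
  by rewrite (bigD1 c) //= pG.
rewrite (eq_bigr _ (fun c _ => cardGood c)) sum_nat_const cardCS in main.
rewrite -(cardsC (ES S)) expnD mulnA in main.
have kp : (0 < k ^ #|~: ES S|)%N by rewrite expn_gt0 k0.
by rewrite -(leq_pmul2r kp).
Qed.

Lemma handshake_tl (G : ograph) (S : {set gV G}) :
  (\sum_(v in S) #|[set e in ES S | tl e == v]| = #|ES S|)%N.
Proof.
rewrite -sum1_card.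
have -> : (\sum_(v in S) #|[set e in ES S | tl e == v]| =
   \sum_(v in S) \sum_(e in ES S) (tl e == v : nat))%N.
  apply: eq_bigr => v _; rewrite -sum1_card big_mkcond /= [RHS]big_mkcond /=.
  by apply: eq_bigr => e _; rewrite inE; case: (e \in ES S); case: (tl e == v).
rewrite exchange_big /=; apply: eq_bigr => e; rewrite inE => /andP [te _].
by rewrite (bigD1 (tl e)) //= eqxx big1 // => v /andP [_ /negbTE]; rewrite eq_sym => ->.
Qed.

Lemma handshake_hd (G : ograph) (S : {set gV G}) :
  (\sum_(v in S) #|[set e in ES S | hd e == v]| = #|ES S|)%N.
Proof.
rewrite -sum1_card.
have -> : (\sum_(v in S) #|[set e in ES S | hd e == v]| =
   \sum_(v in S) \sum_(e in ES S) (hd e == v : nat))%N.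
  apply: eq_bigr => v _; rewrite -sum1_card big_mkcond /= [RHS]big_mkcond /=.
  by apply: eq_bigr => e _; rewrite inE; case: (e \in ES S); case: (hd e == v).
rewrite exchange_big /=; apply: eq_bigr => e; rewrite inE => /andP [_ te].
by rewrite (bigD1 (hd e)) //= eqxx big1 // => v /andP [_ /negbTE]; rewrite eq_sym => ->.
Qed.

Lemma leq_expb (m n e : nat) : (m <= n)%N -> (m ^ e <= n ^ e)%N.
Proof. by move=> h; elim: e => // e IH; rewrite !expnS leq_mul. Qed.

Lemma hprop_of (k M : nat) : (0 < k)%N -> (k ^ 2 * k.-1 ^ M < k ^ M)%N -> h_prop k M.
Proof.
move=> k0 hk G [Gm [cG col]] Gm' hM.
apply: (greedy hM) => S S0.
case: (boolP [exists v in S, deg S v < M]%N) => [/exists_inP [v vS dv]|/exists_inP nex].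
  by exists v.
exfalso.
have hdeg : (M * #|S| <= #|ES S| * 2)%N.
  rewrite mulnC -sum_nat_const muln2 -addnn -{1}(handshake_tl S) -(handshake_hd S) -big_split /=.
  apply: leq_sum => v vS; rewrite leqNgt; apply/negP => dv; apply: nex; exists v => //.
have cnt := count_bound S col; rewrite cG in cnt.
set a := #|ES S| in hdeg cnt; set s := #|S| in hdeg cnt.
have s0 : (0 < s)%N by rewrite /s card_gt0.
have sq : (k ^ (a * 2) <= k ^ (s * 2) * k.-1 ^ (a * 2))%N.
  by rewrite !expnM -expnMn leq_exp2r.
have hs : (k ^ (2 * s) * k.-1 ^ (M * s) < k ^ (M * s))%N.
  by rewrite !expnM -expnMn ltn_exp2r.
move: sq; rewrite -(subnKC hdeg) !expnD.
set r := (a * 2 - M * s)%N => sq.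
have h1 : (k ^ (s * 2) * (k.-1 ^ (M * s) * k.-1 ^ r) <= k ^ (s * 2) * k.-1 ^ (M * s) * k ^ r)%N.
  by rewrite mulnA leq_mul2l leq_expb ?leq_pred ?orbT.
have kr : (0 < k ^ r)%N by rewrite expn_gt0 k0.
have h2 : (k ^ (s * 2) * k.-1 ^ (M * s) * k ^ r < k ^ (M * s) * k ^ r)%N.
  by rewrite ltn_pmul2r // [(s * 2)%N]mulnC.
by move: (leq_ltn_trans sq (leq_ltn_trans h1 h2)); rewrite ltnn.
Qed.
Section Fp.
Variable p : nat.
Hypothesis pr : prime p.

Lemma transl (A : {set 'F_p}) (a b : 'F_p) : a != b -> A != set0 ->
  [set x + a | x in A] = [set x + b | x in A] -> A = setT.
Proof.
move=> ab A0 E.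
set d := b - a.
have d0 : d != 0 by rewrite subr_eq0 eq_sym.
have cl : forall x, x \in A -> x + d \in A.
  move=> x xA; have : x + b \in [set x + a | x in A] by rewrite E; apply/imsetP; exists x.
  case/imsetP => y yA e; suff -> : x + d = y by [].
  by rewrite /d addrA e addrK.
have cln : forall n x, x \in A -> x + d *+ n \in A.
  elim=> [|n IH] x xA; first by rewrite mulr0n addr0.
  by rewrite mulrS addrA; apply: IH; apply: cl.
have [x xA] := set0Pn _ A0.
apply/setP => z; rewrite inE; apply/idP.
set e := (z - x) / d.
have -> : z = x + d *+ (val e).
  rewrite -mulr_natr natr_Zp /e mulrC divfK //. by rewrite addrC subrK.
exact: cln.
Qed.

Variable D : nat -> {set 'F_p}.
Hypothesis D2 : forall i, (2 <= #|D i|)%N.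

Fixpoint Rs (j : nat) : {set 'F_p} :=
  if j is j'.+1 then [set x + y | x in Rs j', y in D j'] else [set 0].

Lemma Rs_mem j x : x \in Rs j -> exists c : nat -> 'F_p,
  [/\ c 0%N = 0, c j = x & forall i, (i < j)%N -> c i.+1 - c i \in D i].
Proof.
elim: j x => [|j IH] x /=.
  by rewrite inE => /eqP ->; exists (fun _ => 0).
case/imset2P => y d yR dD ->.
have [c [c0 cj cs]] := IH y yR.
exists (fun i => if i == j.+1 then y + d else c i); split => //; first by rewrite eqxx.
move=> i; rewrite ltnS leq_eqVlt => /orP [/eqP ->|ij].
  by rewrite eqxx (ltn_eqF (ltnSn j)) cj addrC addKr.
rewrite eqSS (ltn_eqF ij) (ltn_eqF (ltn_trans ij (ltnSn j))).
exact: cs.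
Qed.

Lemma Rs_card j : (minn p j.+1 <= #|Rs j|)%N.
Proof.
elim: j => [|j IH] /=.
  by rewrite cards1 geq_minr.
set A := Rs j; set B := [set x + y | x in A, y in D j].
have [a [b [aD bD ab]]] : exists a b, [/\ a \in D j, b \in D j & a != b].
  by have /card_gt1P [a [b [? ? ?]]] := D2 j; exists a, b.
have sub c : c \in D j -> [set x + c | x in A] \subset B.
  move=> cD; apply/subsetP => z /imsetP [x xA ->]; apply/imset2P; exists x c => //.
have cardT c : #|[set x + c | x in A]| = #|A|.
  by apply: card_imset; exact: addIr.
have leAB : (#|A| <= #|B|)%N by rewrite -(cardT a) subset_leq_card // sub.
have A0 : A != set0.
  by rewrite -card_gt0 (leq_trans _ IH) // leq_min prime_gt0.
have [AT|AnT] := eqVneq A setT.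
  apply: leq_trans (geq_minl _ _) _; apply: leq_trans leAB.
  by rewrite AT cardsT card_Fp.
case: (ltnP #|A| #|B|) => [lt|ge].
  move: IH; rewrite !geq_min => /orP [h|h]; apply/orP; [left|right].
    by apply: leq_trans h (ltnW lt).
  by apply: leq_trans lt.
exfalso; move/negP: AnT; apply; apply/eqP.
have eqa : [set x + a | x in A] = B.
  by apply/eqP; rewrite eqEcard sub //= cardT.
have eqb : [set x + b | x in A] = B.
  by apply/eqP; rewrite eqEcard sub //= cardT.
by apply: (transl ab A0); rewrite eqa eqb.
Qed.

Lemma cycle_sum n : (p.-1 <= n)%N -> exists c : nat -> 'F_p,
  [/\ c 0%N = 0, c n = 0 & forall i, (i < n)%N -> c i.+1 - c i \in D i].
Proof.
move=> pn; apply: Rs_mem.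
have : (p <= #|Rs n|)%N.
  apply: leq_trans (Rs_card n); rewrite leq_min leqnn /=.
  by rewrite -(prednK (prime_gt0 pr)) ltnS.
rewrite -{1}(card_Fp pr) -cardsT => h.
have -> : Rs n = setT by apply/eqP; rewrite eqEcard subsetT h.
by rewrite inE.
Qed.
End Fp.

HB.instance Definition _ (A B : finZmodType) := GRing.Zmodule.copy (A * B)%type (A * B)%type.

Lemma ordS_val n (i : 'I_n) : nat_of_ord (ordS i) = (if i.+1 < n then i.+1 else 0)%N.
Proof.
rewrite /=; case: ltnP => h; first by rewrite modn_small.
have -> : i.+1 = n by apply/eqP; rewrite eqn_leq h ltn_ord.
by rewrite modnn.
Qed.

Definition cycE (q : nat) := ('I_((q.+4).*2.+1) * 'Z_(q.+2))%type.

Lemma cyc_loopless q (e : cycE q) : e.1 != ordS e.1.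
Proof.
apply/eqP => /(congr1 (@nat_of_ord _)); rewrite ordS_val; case: ifP => hl.
  by move/eqP; rewrite eq_sym (gtn_eqF (ltnSn _)).
by move=> h0; move: hl; rewrite h0.
Qed.

Definition cycG (q : nat) : ograph :=
  @OGraph 'I_((q.+4).*2.+1) (cycE q) (fun e => e.1) (fun e => ordS e.1) (@cyc_loopless q).

Lemma cyc_Fp q : prime q.+4 -> colorable ('F_(q.+4) : finZmodType) (cycG q).
Proof.
move=> pr phi.
pose D i := (~: [set phi (inord i, t) | t in 'Z_(q.+2)] : {set 'F_(q.+4)}).
have D2 : forall i, (2 <= #|D i|)%N.
  move=> i.
  have h : (#|[set phi (inord i, t) | t in 'Z_(q.+2)]| <= q.+2)%N.
    by apply: leq_trans (leq_imset_card _ _) _; rewrite card_ord.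
  rewrite /D cardsCs setCK card_Fp //; apply: leq_trans (leq_sub2l _ h).
  by rewrite !subSS !subSn // subnn.
have [|cs [c0 cL cst]] := cycle_sum pr D2 (n := (q.+4).*2.+1).
  apply: leq_trans (leqnSn _) _; rewrite -addnn; apply: leq_trans (leq_addr _ _) (leqnSn _).
exists (fun v => cs (val v)) => [[i t]] /=.
have hi := ltn_ord i.
have hD : cs i.+1 - cs i \notin [set phi (inord i, t) | t in 'Z_(q.+2)].
  by have := cst i hi; rewrite inE.
case: (ltnP i.+1 (q.+4).*2.+1) => hl.
  rewrite (modn_small hl).
  apply: contra hD => /eqP E; apply/imsetP; exists t => //; by rewrite inord_val E.
have Ei : i.+1 = (q.+4).*2.+1 by apply/eqP; rewrite eqn_leq hi hl.
rewrite {1}Ei modnn.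
have -> : cs 0%N = cs i.+1 by rewrite Ei cL c0.
apply: contra hD => /eqP E; apply/imsetP; exists t => //; by rewrite inord_val E.
Qed.

Lemma cyc_not2 q : ~ colorable (('Z_2 * 'Z_(q.+2))%type : finZmodType) (cycG q).
Proof.
move=> col.
have [c hc] := col (fun e => (0, e.2)).
have step : forall i : 'I_((q.+4).*2.+1), (c (ordS i) - c i).1 = 1.
  have h : forall z : ('Z_2 * 'Z_(q.+2))%type, z != (0, z.2) -> z.1 = 1.
    case=> [[[|[|n]] hx] y] //=.
      by rewrite (_ : Ordinal hx = 0) ?eqxx //; apply: val_inj.
    by move=> _; apply: val_inj.
  move=> i; apply: h; exact: (hc (i, (c (ordS i) - c i).2)).
have ind : forall j, (j < (q.+4).*2.+1)%N -> (c (inord j) - c ord0).1 = j%:R.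
  elim=> [|j IH] hj.
    by rewrite (_ : inord 0 = ord0) ?subrr //; apply: val_inj; rewrite /= inordK.
  have hj' : (j < (q.+4).*2.+1)%N by apply: ltnW.
  have e : ordS (inord j : 'I_((q.+4).*2.+1)) = inord j.+1.
    by apply: val_inj; rewrite /= inordK // inordK // modn_small.
  rewrite -e -[c (ordS _)](subrK (c (inord j))) -addrA.
  have fst_add : forall x y : ('Z_2 * 'Z_(q.+2))%type, (x + y).1 = x.1 + y.1 by [].
  by rewrite fst_add step IH // mulrS.
have fst_opp : forall x : ('Z_2 * 'Z_(q.+2))%type, (- x).1 = - x.1 by [].
set i := (inord (q.+4).*2 : 'I_((q.+4).*2.+1)).
have e : ordS i = ord0 by apply: val_inj; rewrite /= inordK // modnn.
have := step i; rewrite e -opprB fst_opp ind //.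
have -> : ((q.+4).*2%:R : 'Z_2) = 0.
  by rewrite -muln2 natrM (_ : (2%:R : 'Z_2) = 0) ?mulr0 //; apply: val_inj.
by rewrite oppr0 => /eqP; rewrite eq_sym oner_eq0.
Qed.

Lemma lower q : prime q.+4 -> forall m, h_prop q.+4 m -> (2 * q.+2 < m)%N.
Proof.
move=> pr m hm; rewrite ltnNge; apply/negP => le.
apply: (@cyc_not2 q); apply: hm.
  by exists ('F_(q.+4) : finZmodType); split; [exact: card_Fp | exact: cyc_Fp].
by rewrite card_prod !card_ord.
Qed.

Lemma least_ex (P : nat -> Prop) n0 : P n0 -> exists m, P m /\ forall m', P m' -> (m <= m')%N.
Proof.
move=> Pn.
suff: forall n, (exists j, (j <= n)%N /\ P j) -> exists m, P m /\ forall m', P m' -> (m <= m')%N.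
  by move=> H; apply: (H n0); exists n0; split.
elim=> [|n IH] [j [jn Pj]].
  by exists j; split => // m' _; move: jn; rewrite leqn0 => /eqP ->.
case: (classic (exists j', (j' <= n)%N /\ P j')) => [h|h]; first exact: IH h.
exists j; split => // m' Pm'; rewrite leqNgt; apply/negP => lt.
apply: h; exists m'; split => //; by rewrite -ltnS (leq_trans lt jn).
Qed.

Lemma P1 k M : h_prop k M -> exists m, is_h k m.
Proof. move=> h; have [m [Pm min]] := least_ex h; by exists m. Qed.

Lemma P2 k M m : is_h k m -> h_prop k M -> (m <= M)%coq_nat.
Proof. by move=> [_ min] h; apply/leP; apply: min. Qed.

Lemma expn_pow m n : (m ^ n)%N = Nat.pow m n.
Proof. by elim: n => // n IH; rewrite expnS IH. Qed.

Lemma P3 k M : (0 < k)%coq_nat -> (Nat.mul (Nat.pow k 2) (Nat.pow (Nat.sub k 1) M) < Nat.pow k M)%coq_nat -> h_prop k M.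
Proof.
move=> /ltP k0 /ltP h; apply: hprop_of => //.
by rewrite -subn1 !expn_pow; rewrite multE minusE in h.
Qed.

Lemma P4 : h_prop 0 0.
Proof. move=> G [Gm [cG _]]; exfalso; suff : (0 < #|Gm|)%N by rewrite cG. by apply/card_gt0P; exists 0. Qed.

Lemma P5 N : exists q, (N <= q)%coq_nat /\ forall m, is_h q.+4 m -> (Nat.mul 2 q.+2 < m)%coq_nat.
Proof.
have [p Np pr] := prime_above (N + 4).
have h4 : (4 <= p)%N by apply: leq_trans (leq_addl N 4) (ltnW Np).
have p4 : p = (p - 4)%N.+4 by rewrite -addn4 subnK.
exists (p - 4)%N; split; first by apply/leP; rewrite leq_subRL // addnC ltnW.
move=> m [hm _]; apply/ltP; rewrite multE; apply: lower => //; by rewrite -p4.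
Qed.
End H.

From Stdlib Require Import Lra Lia.
Module Rp.
Local Open Scope R_scope.
Lemma ln_diff (x : R) : 1 < x -> / x <= ln x - ln (x - 1).
Proof.
intros hx.
assert (h : ln (x - 1) - ln x <= - / x).
{ replace (ln (x - 1) - ln x) with (ln ((x - 1) / x)) by (unfold Rdiv; rewrite ln_mult, ln_Rinv by (try apply Rinv_0_lt_compat; lra); ring).
  assert (e : (x - 1) / x = exp (ln ((x-1)/x))) by (rewrite exp_ln; [reflexivity| apply Rdiv_lt_0_compat; lra]).
  pose proof (exp_ineq1_le (- / x)).
  assert (hh : (x - 1) / x = 1 + - / x) by (field; lra).
  rewrite hh. rewrite hh in e.
  destruct (Rle_or_lt (ln (1 + - / x)) (- / x)) as [H1|H1]; auto.
  exfalso. apply exp_increasing in H1. rewrite <- e in H1. lra. }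
lra.
Qed.

Lemma key_real (k M : nat) : (2 <= k)%nat -> 2 * INR k * ln (INR k) < INR M ->
  INR k ^ 2 * (INR k - 1) ^ M < INR k ^ M.
Proof.
intros hk hM.
assert (k2 : 2 <= INR k) by (replace 2 with (INR 2) by (simpl; lra); apply le_INR; lia).
assert (hpos : 0 < INR k - 1) by lra.
apply ln_lt_inv.
- apply Rmult_lt_0_compat; apply pow_lt; lra.
- apply pow_lt; lra.
- rewrite ln_mult by (apply pow_lt; lra).
  rewrite !ln_pow by lra.
  pose proof (ln_diff (INR k) ltac:(lra)) as hd.
  assert (lk : 0 < ln (INR k)) by (rewrite <- ln_1; apply ln_increasing; lra).
  assert (hM0 : 0 <= INR M) by apply pos_INR.
  assert (h1 : INR M * / INR k <= INR M * (ln (INR k) - ln (INR k - 1))) by (apply Rmult_le_compat_l; lra).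
  assert (h2 : 2 * ln (INR k) < INR M * / INR k).
  { apply (Rmult_lt_reg_r (INR k)); [lra|].
    field_simplify; [|lra]. lra. }
  simpl INR. lra.
Qed.

Lemma key_nat (k M : nat) : (2 <= k)%nat -> 2 * INR k * ln (INR k) < INR M ->
  (k ^ 2 * (k - 1) ^ M < k ^ M)%nat.
Proof.
intros hk hM. apply INR_lt. rewrite mult_INR, !pow_INR, minus_INR by lia.
simpl (INR 1). apply key_real; auto.
Qed.


Lemma INR_up (r : R) : 0 < r -> INR (Z.to_nat (up r)) = IZR (up r).
Proof.
intros hr. destruct (archimed r) as [h1 _].
assert (u0 : (0 < up r)%Z) by (apply lt_IZR; simpl; lra).
rewrite INR_IZR_INZ, Znat.Z2Nat.id; [reflexivity| lia].
Qed.

Lemma M_exists k : (2 <= k)%nat -> exists M, h_prop k M /\ INR M <= 2 * INR k * ln (INR k) + 1.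
Proof.
intros hk.
assert (k2 : 2 <= INR k) by (replace 2 with (INR 2) by (simpl; lra); apply le_INR; lia).
assert (lk : 0 < ln (INR k)) by (rewrite <- ln_1; apply ln_increasing; lra).
set (r := 2 * INR k * ln (INR k)).
assert (r0 : 0 < r) by (unfold r; apply Rmult_lt_0_compat; lra).
destruct (archimed r) as [h1 h2].
exists (Z.to_nat (up r)). rewrite INR_up by lra.
split.
- apply H.P3; [apply (Nat.lt_le_trans 0 2 k); [repeat constructor|exact hk]|]. apply key_nat; auto. rewrite INR_up by lra. exact h1.
- lra.
Qed.

End Rp.

Theorem mainTheorem10 :
  (* h(k) exists for every k *)
  (forall k : nat, exists m : nat, is_h k m) /\
  (* (a) for every eps > 0, infinitely many k with h(k) > (2 - eps) k *)
  (forall eps : R, (0 < eps)%R ->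
     forall N : nat, exists k : nat, (N <= k)%nat /\
       forall m : nat, is_h k m -> ((2 - eps) * INR k < INR m)%R) /\
  (* (b) for every eps > 0 there is K with h(k) < (2 + eps) k ln k for k >= K *)
  (forall eps : R, (0 < eps)%R ->
     exists K : nat, forall k : nat, (K <= k)%nat ->
       forall m : nat, is_h k m -> (INR m < (2 + eps) * INR k * ln (INR k))%R).
Proof.
split; [|split].
- intro k. destruct k as [|[|k]].
  + exact (H.P1 H.P4).
  + apply (@H.P1 1 1). apply H.P3; simpl; lia.
  + destruct (Rp.M_exists (S (S k))) as [M [hM _]]; [lia|]. exact (H.P1 hM).
- intros eps he N.
  assert (t0 : (0 < 3 / eps)%R) by (apply Rdiv_lt_0_compat; lra).
  destruct (archimed (3 / eps)) as [a1 _].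
  destruct (H.P5 (max N (Z.to_nat (up (3 / eps))))) as [q [hq hl]].
  exists (S (S (S (S q)))). split; [lia|].
  intros m hm. specialize (hl m hm).
  assert (hq1 : (Z.to_nat (up (3 / eps)) <= q)%nat) by lia.
  apply le_INR in hq1. rewrite (Rp.INR_up _ t0) in hq1.
  assert (hm2 : (2 * S (S q) + 1 <= m)%nat) by lia.
  apply le_INR in hm2. rewrite plus_INR, mult_INR, !S_INR, INR_0 in hm2.
  assert (eq3 : (eps * INR q > 3)%R).
  { assert (h3 : (3 / eps < INR q)%R) by lra.
    apply (Rmult_lt_compat_l eps) in h3; [|lra].
    replace (eps * (3 / eps))%R with 3%R in h3 by (field; lra). lra. }
  rewrite !S_INR. replace ((2 - eps) * (INR q + 1 + 1 + 1 + 1))%R with (2 * INR q + 8 - eps * INR q - 4 * eps)%R by ring. lra.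
- intros eps he.
  assert (t0 : (0 < 1 / eps)%R) by (apply Rdiv_lt_0_compat; lra).
  destruct (archimed (1 / eps)) as [b1 _].
  exists (max 3 (Z.to_nat (up (1 / eps)))). intros k hk m hm.
  destruct (Rp.M_exists k) as [M [hM hMb]]; [lia|].
  pose proof (H.P2 hm hM) as hmM. apply le_INR in hmM.
  assert (hq1 : (Z.to_nat (up (1 / eps)) <= k)%nat) by lia.
  apply le_INR in hq1. rewrite (Rp.INR_up _ t0) in hq1.
  assert (k3 : (3 <= INR k)%R) by (replace 3%R with (INR 3) by (simpl; lra); apply le_INR; lia).
  assert (l1 : (1 <= ln (INR k))%R).
  { rewrite <- (ln_exp 1). pose proof exp_le_3. destruct (Rle_lt_or_eq_dec (exp 1) (INR k)) as [hl|he2]; [lra| apply Rlt_le, ln_increasing; [apply exp_pos|exact hl] | rewrite he2; apply Rle_refl]. }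
  assert (eq1 : (eps * INR k > 1)%R).
  { assert (h3 : (1 / eps < INR k)%R) by lra.
    apply (Rmult_lt_compat_l eps) in h3; [|lra].
    replace (eps * (1 / eps))%R with 1%R in h3 by (field; lra). lra. }
  assert (eq2 : (eps * INR k * ln (INR k) >= eps * INR k)%R).
  { assert (0 <= eps * INR k)%R by lra. nra. }
  nra.
Qed.
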